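(* Let $w:=3/\sqrt{2}$, and for $t\in[0,w]$ put $x:=-t+wi$. Define $M(q,t):=|(1+qx)(1+q/x)|$ and $M_0(q,t):=(1-q)M(q,t)$. Then: for each fixed $q\in[0.6,1]$, the functions $t\mapsto M(q,t)$ and $t\mapsto M_0(q,t)$ on $[0,w]$ attain their maximum at $t=0$; and for each fixed $q\in[0.6,0.75]$, the functions $t\mapsto M(q,t)$ and $t\mapsto M_0(q,t)$ on $[1,w]$ attain their maximum at $t=1$. *)

(* Defs.v *)
From Stdlib Require Import Reals.
From Coquelicot Require Import Coquelicot.
Open Scope R_scope.

Definition w : R := 3 / sqrt 2.

Definition xpt (t : R) : C := (RtoC (- t) + RtoC w * Ci)%C.

Definition M (q t : R) : R :=
  Cmod ((RtoC 1 + RtoC q * xpt t) * (RtoC 1 + RtoC q / xpt t))%C.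

Definition M0 (q t : R) : R := (1 - q) * M q t.

(* Main.v *)
Require Import Defs.
From Stdlib Require Import Reals Lra Psatz.
From Coquelicot Require Import Coquelicot.
Open Scope R_scope.

Lemma ww : w * w = 9/2.
Proof. unfold w. assert (h := sqrt_sqrt 2 ltac:(lra)). assert (0 < sqrt 2) by (apply sqrt_lt_R0; lra).
replace (3 / sqrt 2 * (3 / sqrt 2)) with (9 / (sqrt 2 * sqrt 2)) by (field; lra).
rewrite h. lra. Qed.

Definition F q t := ((1-q*t)^2 + q^2*(9/2)) * ((q - t)^2 + 9/2) / (t^2+9/2).

Lemma MF q t : M q t = sqrt (F q t).
Proof.
  unfold M. rewrite Cmod_mult. unfold Cmod. rewrite <- sqrt_mult.
  2,3: nra.
  f_equal. unfold F, xpt. simpl. assert (h:=ww). rewrite <- h.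
  assert (0 < t*t + w*w) by nra.
  field. nra.
Qed.

Lemma F1 q t : 0 <= q -> 0 <= t -> t^2 <= 9/2 -> F q t <= F q 0.
Proof.
  intros Hq Ht Htw. unfold F.
  assert (K: 0 <= q*t*(q*t*(1 - 9/2*(t^2+9/2)) + 9*(1+q^2)*(1+t^2+9/2) - 18*q*t)).
  { apply Rmult_le_pos; [nra|].
    assert (0 <= t*(9/2 - t^2)) by (apply Rmult_le_pos; lra).
    assert (0 <= 18*(t - 115/72)^2) by (apply Rmult_le_pos; [lra|apply pow2_ge_0]).
    assert (Hf: 0 <= 18*(1+t^2+9/2) - t*(9/2*(t^2+9/2) + 17)) by nra.
    assert (0 <= 9*(1+t^2+9/2)*(q-1)^2) by (apply Rmult_le_pos; [nra|apply pow2_ge_0]).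
    assert (0 <= q * (18*(1+t^2+9/2) - t*(9/2*(t^2+9/2) + 17))) by (apply Rmult_le_pos; nra).
    nra. }
  assert (0 < t^2 + 9/2) by nra.
  apply Rminus_le.
  match goal with |- ?a / _ - ?b / _ <= 0 =>
  replace (a / (t^2+9/2) - b/(0^2+9/2)) with ((a*(9/2) - b*(t^2+9/2)) * / ((t^2+9/2)*(9/2))) by (field; lra) end.
  assert (0 < / ((t^2+9/2)*(9/2))) by (apply Rinv_0_lt_compat; nra).
  match goal with |- ?X * _ <= 0 => assert (X <= 0) by nra end.
  nra.
Qed.

Definition aa t := 2*(11/2*t^2 - t + 117/4).
Definition bb t := (t+1)*(11/2*t^2+167/4).
Definition gg t := -(3/4)*bb t + (1+(3/4)^2)*aa t.

Lemma K2pos q t : 3/5 <= q <= 3/4 -> 1 <= t -> t^2 <= 9/2 ->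
  0 <= - q*(t+1)*(11/2*t^2+167/4) + 2*(1+q^2)*(11/2*t^2 - t + 117/4).
Proof.
  intros Hq Ht Htw.
  assert (E: - q*(t+1)*(11/2*t^2+167/4) + 2*(1+q^2)*(11/2*t^2 - t + 117/4)
     = gg t + (3/2*aa t - bb t)*(q-3/4) + aa t*(q-3/4)^2) by (unfold gg, aa, bb; field).
  rewrite E.
  assert (Ha: 0 <= aa t) by (unfold aa; nra).
  assert (0 <= aa t*(q-3/4)^2) by (apply Rmult_le_pos; [lra|apply pow2_ge_0]).
  assert (Hh: 3/2*aa t - bb t - 27/4 = (t-1)*(-11/2*t^2 + 11/2*t - 157/4)) by (unfold aa, bb; field).
  assert (0 <= 11/2*(t-1/2)^2) by (apply Rmult_le_pos; [lra|apply pow2_ge_0]).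
  assert (Hh2: 3/2*aa t - bb t - 27/4 <= 0).
  { rewrite Hh. assert (0 <= (t-1)*(11/2*t^2 - 11/2*t + 157/4)) by (apply Rmult_le_pos; nra). nra. }
  assert (0 <= (3/2*aa t - bb t - 27/4)*(q-3/4)) by nra.
  assert (0 <= t*(9/2 - t^2)) by (apply Rmult_le_pos; lra).
  assert (0 <= 209/16*(t - 424/209)^2) by (apply Rmult_le_pos; [lra|apply pow2_ge_0]).
  assert (Hg: 2 <= gg t) by (unfold gg, aa, bb; nra).
  nra.
Qed.

Lemma F2 q t : 3/5 <= q <= 3/4 -> 1 <= t -> t^2 <= 9/2 -> F q t <= F q 1.
Proof.
  intros Hq Ht Htw. unfold F.
  assert (K := K2pos q t Hq Ht Htw).
  assert (0 < t^2 + 9/2) by nra.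
  apply Rminus_le.
  match goal with |- ?a / _ - ?b / _ <= 0 =>
  replace (a / (t^2+9/2) - b/(1^2+9/2)) with ((a*(1^2+9/2) - b*(t^2+9/2)) * / ((t^2+9/2)*(1^2+9/2))) by (field; lra);
  assert (EE: a*(1^2+9/2) - b*(t^2+9/2) = - (q*(t-1)) * (- q*(t+1)*(11/2*t^2+167/4) + 2*(1+q^2)*(11/2*t^2 - t + 117/4))) by field end.
  rewrite EE.
  assert (0 < / ((t^2+9/2)*(1^2+9/2))) by (apply Rinv_0_lt_compat; nra).
  assert (0 <= q*(t-1)) by nra.
  assert (0 <= (q*(t-1)) * (- q*(t+1)*(11/2*t^2+167/4) + 2*(1+q^2)*(11/2*t^2 - t + 117/4))) by (apply Rmult_le_pos; lra).
  nra.
Qed.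

Lemma wsq t : 0 <= t <= w -> t^2 <= 9/2.
Proof. intros. assert (h := ww). assert (0 <= w) by lra. nra. Qed.

Theorem lemma4 :
  (forall q : R, 3/5 <= q <= 1 ->
     forall t : R, 0 <= t <= w ->
       M q t <= M q 0 /\ M0 q t <= M0 q 0) /\
  (forall q : R, 3/5 <= q <= 3/4 ->
     forall t : R, 1 <= t <= w ->
       M q t <= M q 1 /\ M0 q t <= M0 q 1).
Proof.
  split; intros q Hq t Ht.
  - assert (H1 : M q t <= M q 0).
    { rewrite !MF. apply sqrt_le_1_alt. apply F1; try lra. apply wsq; lra. }
    split; [exact H1|]. unfold M0. apply Rmult_le_compat_l; lra.
  - assert (H1 : M q t <= M q 1).
    { rewrite !MF. apply sqrt_le_1_alt. apply F2; try lra. apply wsq; lra. }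
    split; [exact H1|]. unfold M0. apply Rmult_le_compat_l; lra.
Qed.
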